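(* Let $A_i\in\mathbb{R}^{n\times n}$ ($i=1,\dots,q_A$), $B_j\in\mathbb{R}^{n\times n_f}$ ($j=1,\dots,q_B$), $C_k\in\mathbb{R}^{n_o\times n}$ ($k=1,\dots,q_C$), and $\hat A_i\in\mathbb{R}^{r\times r}$, $\hat B_j\in\mathbb{R}^{r\times n_f}$, $\hat C_k\in\mathbb{R}^{n_o\times r}$. Set \[ \mathbf{C}=\begin{bmatrix}C_1^{\mathrm T}&\cdots&C_{q_C}^{\mathrm T}\end{bmatrix}^{\mathrm T},\quad \hat{\mathbf{C}}=\begin{bmatrix}\hat C_1^{\mathrm T}&\cdots&\hat C_{q_C}^{\mathrm T}\end{bmatrix}^{\mathrm T},\quad \mathbf{B}=\begin{bmatrix}B_1&\cdots&B_{q_B}\end{bmatrix},\quad \hat{\mathbf{B}}=\begin{bmatrix}\hat B_1&\cdots&\hat B_{q_B}\end{bmatrix}. \] Assume $\mathbf{B}$ has full column rank and $\mathbf{C}$ has full row rank, with singular value decompositions \[ \mathbf{C}=U_{\mathbf{C}}\begin{bmatrix}\Sigma_{\mathbf{C}}&0\end{bmatrix}\begin{bmatrix}V_{\mathbf{C},1}&V_{\mathbf{C},2}\end{bmatrix}^{\mathrm T},\qquad \mathbf{B}=\begin{bmatrix}U_{\mathbf{B},1}&U_{\mathbf{B},2}\end{bmatrix}\begin{bmatrix}\Sigma_{\mathbf{B}}\\0\end{bmatrix}V_{\mathbf{B}}^{\mathrm T}, \] where $V_{\mathbf{C},2}\in\mathbb{R}^{n\times(n-q_Cn_o)}$ and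 $U_{\mathbf{B},2}\in\mathbb{R}^{n\times(n-q_Bn_f)}$. Let $V_1=V_{\mathbf{C},1}\Sigma_{\mathbf{C}}^{-1}U_{\mathbf{C}}^{\mathrm T}\hat{\mathbf{C}}$ and $W_1=U_{\mathbf{B},1}\Sigma_{\mathbf{B}}^{-1}V_{\mathbf{B}}^{\mathrm T}\hat{\mathbf{B}}^{\mathrm T}$. If there exists $Y\in\mathbb{R}^{(n-q_Bn_f)\times r}$ such that the matrix \[ \begin{bmatrix}(W_1+U_{\mathbf{B},2}Y)^{\mathrm T}A_1V_{\mathbf{C},2}\\ \vdots\\ (W_1+U_{\mathbf{B},2}Y)^{\mathrm T}A_{q_A}V_{\mathbf{C},2}\end{bmatrix}\in\mathbb{R}^{q_Ar\times(n-q_Cn_o)} \] has full row rank, then there exist $V,W\in\mathbb{R}^{n\times r}$ such that $\hat A_i=W^{\mathrm T}A_iV$ for $i=1,\dots,q_A$, $\hat B_j=W^{\mathrm T}B_j$ for $j=1,\dots,q_B$, and $\hat C_k=C_kV$ for $k=1,\dots,q_C$.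
   Context: In the singular value decompositions, $U_{\mathbf{C}}$, $[V_{\mathbf{C},1}\ V_{\mathbf{C},2}]$, $[U_{\mathbf{B},1}\ U_{\mathbf{B},2}]$, $V_{\mathbf{B}}$ are orthogonal matrices and $\Sigma_{\mathbf{C}}\in\mathbb{R}^{q_Cn_o\times q_Cn_o}$, $\Sigma_{\mathbf{B}}\in\mathbb{R}^{q_Bn_f\times q_Bn_f}$ are diagonal with positive diagonal entries. *)

(* Defs.v *)
From HB Require Import structures.
From mathcomp Require Import all_boot all_order all_algebra.
Set Implicit Arguments. Unset Strict Implicit. Unset Printing Implicit Defensive.
Import Order.TTheory GRing.Theory Num.Theory.
Local Open Scope ring_scope.

(* Block indexing: row i of a (q*m)-stack lies in block i %/ m at offset i %% m. *)
Lemma blk_proof (q m : nat) (i : 'I_(q * m)) : (i %/ m < q)%N.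
Proof.
case: m i => [|m] i; first by rewrite muln0 in i *; case: i.
by rewrite ltn_divLR // ltn_ord.
Qed.

Lemma off_proof (q m : nat) (i : 'I_(q * m)) : (i %% m < m)%N.
Proof.
case: m i => [|m] i; first by rewrite muln0 in i *; case: i.
by rewrite ltn_mod.
Qed.

Definition blk_idx (q m : nat) (i : 'I_(q * m)) : 'I_q := Ordinal (blk_proof i).
Definition off_idx (q m : nat) (i : 'I_(q * m)) : 'I_m := Ordinal (off_proof i).

Definition vstack (R : Type) (q m p : nat) (F : 'I_q -> 'M[R]_(m, p)) : 'M[R]_(q * m, p) :=
  \matrix_(i < q * m, j < p) F (blk_idx i) (off_idx i) j.

Definition hstack (R : Type) (q m p : nat) (F : 'I_q -> 'M[R]_(m, p)) : 'M[R]_(m, q * p) :=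
  \matrix_(i < m, j < q * p) F (blk_idx j) i (off_idx j).

(* orthogonal matrix (possibly with a non-syntactically-square type) *)
Definition orthogonal_mx (R : pzRingType) (m p : nat) (U : 'M[R]_(m, p)) : Prop :=
  U *m U^T = 1%:M /\ U^T *m U = 1%:M.

Definition posdiag (R : numDomainType) (m : nat) (S : 'M[R]_m) : Prop :=
  is_diag_mx S /\ forall i, 0 < S i i.

(* Main.v *)
Require Import Defs.
From HB Require Import structures.
From mathcomp Require Import all_boot all_order all_algebra.
Import Order.TTheory GRing.Theory Num.Theory.
Local Open Scope ring_scope.
Set Implicit Arguments. Unset Strict Implicit. Unset Printing Implicit Defensive.

Lemma blk_off_ex {q m : nat} (j : 'I_q) (c : 'I_m) :
  exists k : 'I_(q * m), blk_idx k = j /\ off_idx k = c.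
Proof.
have hm : (0 < m)%N by apply: leq_ltn_trans (ltn_ord c).
have hk : (j * m + c < q * m)%N.
  apply: (@leq_trans (j.+1 * m)); first by rewrite mulSnr ltn_add2l.
  by rewrite leq_mul2r ltn_ord orbT.
exists (Ordinal hk); split; apply/val_inj => /=.
  by rewrite divnMDl // divn_small // addn0.
by rewrite modnMDl modn_small.
Qed.

Lemma hstack_inj (R : pzRingType) q m p (F G : 'I_q -> 'M[R]_(m, p)) :
  hstack F = hstack G -> forall j, F j = G j.
Proof.
move=> E j; apply/matrixP => i c.
have [k [hb ho]] := blk_off_ex j c.
by move/matrixP: E => /(_ i k); rewrite !mxE hb ho.
Qed.

Lemma vstack_inj (R : pzRingType) q m p (F G : 'I_q -> 'M[R]_(m, p)) :
  vstack F = vstack G -> forall j, F j = G j.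
Proof.
move=> E j; apply/matrixP => c i.
have [k [hb ho]] := blk_off_ex j c.
by move/matrixP: E => /(_ k i); rewrite !mxE hb ho.
Qed.

Lemma mul_hstack (R : pzRingType) q m p l (M : 'M[R]_(l, m)) (F : 'I_q -> 'M[R]_(m, p)) :
  M *m hstack F = hstack (fun j => M *m F j).
Proof.
apply/matrixP => i k; rewrite !mxE; apply: eq_bigr => x _; by rewrite !mxE.
Qed.

Lemma vstack_mul (R : pzRingType) q m p l (M : 'M[R]_(p, l)) (F : 'I_q -> 'M[R]_(m, p)) :
  vstack F *m M = vstack (fun j => F j *m M).
Proof.
apply/matrixP => i k; rewrite !mxE; apply: eq_bigr => x _; by rewrite !mxE.
Qed.

Lemma diag_tr (R : pzRingType) m (S : 'M[R]_m) : is_diag_mx S -> S^T = S.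
Proof. by case/diag_mxP => d ->; rewrite tr_diag_mx. Qed.

Lemma posdiag_unit (R : realFieldType) m (S : 'M[R]_m) : posdiag S -> S \in unitmx.
Proof.
case=> /diag_mxP [d Sd] hp; rewrite unitmxE unitfE Sd det_diag.
rewrite prodf_seq_neq0; apply/allP => i _ /=.
by have := hp i; rewrite Sd mxE eqxx mulr1n => /gt_eqF ->.
Qed.

Lemma orth_split (R : pzRingType) n a b (X : 'M[R]_(n, a)) (Y : 'M[R]_(n, b)) :
  orthogonal_mx (row_mx X Y) ->
  [/\ X^T *m X = 1%:M, X^T *m Y = 0, Y^T *m X = 0 & Y^T *m Y = 1%:M].
Proof.
case=> _; rewrite tr_row_mx mul_col_row (scalar_mx_block a b).
by case/eq_block_mx.
Qed.

Theorem theorem2 (R : realFieldType) (n nf no r qA qB qC : nat)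
  (A : 'I_qA -> 'M[R]_n) (B : 'I_qB -> 'M[R]_(n, nf)) (C : 'I_qC -> 'M[R]_(no, n))
  (Ah : 'I_qA -> 'M[R]_r) (Bh : 'I_qB -> 'M[R]_(r, nf)) (Ch : 'I_qC -> 'M[R]_(no, r))
  (UC : 'M[R]_(qC * no)) (SC : 'M[R]_(qC * no))
  (VC1 : 'M[R]_(n, qC * no)) (VC2 : 'M[R]_(n, n - qC * no))
  (UB1 : 'M[R]_(n, qB * nf)) (UB2 : 'M[R]_(n, n - qB * nf))
  (SB : 'M[R]_(qB * nf)) (VB : 'M[R]_(qB * nf)) :
  \rank (hstack B) = (qB * nf)%N ->
  \rank (vstack C) = (qC * no)%N ->
  orthogonal_mx UC -> orthogonal_mx (row_mx VC1 VC2) -> posdiag SC ->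
  vstack C = UC *m row_mx SC 0 *m (row_mx VC1 VC2)^T ->
  orthogonal_mx (row_mx UB1 UB2) -> orthogonal_mx VB -> posdiag SB ->
  hstack B = row_mx UB1 UB2 *m col_mx SB 0 *m VB^T ->
  let V1 := VC1 *m invmx SC *m UC^T *m vstack Ch in
  let W1 := UB1 *m invmx SB *m VB^T *m (hstack Bh)^T in
  (exists Y : 'M[R]_(n - qB * nf, r),
      \rank (vstack (fun i => (W1 + UB2 *m Y)^T *m A i *m VC2)) = (qA * r)%N) ->
  exists V W : 'M[R]_(n, r),
    [/\ forall i, Ah i = W^T *m A i *m V,
        forall j, Bh j = W^T *m B j
      & forall k, Ch k = C k *m V].
Proof.
move=> _ _ [UCo _] /orth_split [C11 C12 C21 C22] hSC EC
  /orth_split [B11 B12 B21 B22] [VBo _] hSB EB V1 W1 [Y hY].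
set W := W1 + UB2 *m Y.
set M := vstack (fun i => W^T *m A i *m VC2).
set D := vstack (fun i => Ah i - W^T *m A i *m V1).
have uSC := posdiag_unit hSC; have uSB := posdiag_unit hSB.
have hfull : row_full M^T by rewrite /row_full mxrank_tr hY.
have hD : (D^T <= M^T)%MS by apply: submx_full.
set Z := (D^T *m pinvmx M^T)^T.
have MZ : M *m Z = D.
  by rewrite -[M]trmxK -trmx_mul (mulmxKpV hD) trmxK.
have ECs : vstack C = UC *m SC *m VC1^T.
  by rewrite EC tr_row_mx -mulmxA mul_row_col mul0mx addr0 mulmxA.
have EBs : hstack B = UB1 *m SB *m VB^T.
  by rewrite EB mul_row_col mulmx0 addr0.
  have tD : forall a b : 'M[R]_(n, r), (a + b)^T = a^T + b^T.
    by move=> a b; apply/matrixP => ? ?; rewrite !mxE.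
exists (V1 + VC2 *m Z), W; split.
- move=> i; move: MZ; rewrite /M vstack_mul => /vstack_inj /(_ i).
  move=> h; by rewrite mulmxDr [X in _ + X]mulmxA h addrC subrK.
- apply: hstack_inj; rewrite -mul_hstack EBs /W /W1 tD mulmxDl.
  rewrite !trmx_mul !trmxK !mulmxA -(mulmxA _ UB2^T UB1) B21 mulmx0 !mul0mx addr0.
  rewrite -(mulmxA _ UB1^T UB1) B11 mulmx1.
  rewrite -(mulmxA _ _ SB) -{2}(diag_tr hSB.1) -trmx_mul mulmxV // trmx1 mulmx1.
  by rewrite -mulmxA VBo mulmx1.
- apply: vstack_inj; rewrite -vstack_mul ECs mulmxDr /V1.
  rewrite [X in _ + X]mulmxA -(mulmxA _ VC1^T VC2) C12 mulmx0 mul0mx addr0.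
  rewrite !mulmxA -(mulmxA _ VC1^T VC1) C11 mulmx1 -(mulmxA UC SC) mulmxV // mulmx1.
  by rewrite UCo mul1mx.
Qed.
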